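(* Let $Y\subset\mathbb{R}^n$ be open, and let $\omega\colon Y\to\mathbb{R}^n$, $f\colon Y\to\mathbb{R}^n$, $F\colon Y\to\mathbb{R}$, $H\colon Y\to\mathbb{R}^{n\times m}$, $g\colon Y\to\mathbb{R}^m$, $f^{\mathrm{num}}\colon Y\times Y\to\mathbb{R}^n$, $H^{\mathrm{num}}\colon Y\times Y\to\mathbb{R}^{n\times m}$, $(Hg)^{\mathrm{num}}\colon Y\times Y\to\mathbb{R}^n$ be arbitrary with $f^{\mathrm{num}}(u,u)=f(u)$, $H^{\mathrm{num}}(u,u)=H(u)$, $(Hg)^{\mathrm{num}}(u,u)=H(u)g(u)$. Then the following are equivalent: (A) there exists $F^{\mathrm{num}}\colon Y\times Y\to\mathbb{R}$ with $F^{\mathrm{num}}(u,u)=F(u)$ such that for all $u_-,u_0,u_+\in Y$, $$\omega(u_0)\cdot\Big(f^{\mathrm{num}}(u_0,u_+)-f^{\mathrm{num}}(u_-,u_0)+(Hg)^{\mathrm{num}}(u_0,u_+)-(Hg)^{\mathrm{num}}(u_-,u_0)-H^{\mathrm{num}}(u_0,u_+)g(u_0)+H^{\mathrm{num}}(u_-,u_0)g(u_0)\Big)\ \ge\ F^{\mathrm{num}}(u_0,u_+)-F^{\mathrm{num}}(u_-,u_0);$$ (B) for all $u_-,u_+\in Y$, $$[\![\omega]\!]\cdot f^{\mathrm{num}}+[\![\omega]\!]\cdot (Hg)^{\mathrm{num}}-\omega(u_+)\cdot H^{\mathrm{num}}g(u_+)+\omega(u_-)\cdot H^{\mathrm{num}}g(u_-)\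 \le\ [\![\omega\cdot f-F]\!],$$ with all numerical fluxes evaluated at $(u_-,u_+)$. Moreover, there exists a consistent $F^{\mathrm{num}}$ with equality in (A) for all triples iff (B) holds with equality for all pairs, and then $$F^{\mathrm{num}}=\{\{F\}\}+\{\{\omega\}\}\cdot f^{\mathrm{num}}-\{\{\omega\cdot f\}\}+\{\{\omega\}\}\cdot(Hg)^{\mathrm{num}}-\tfrac12\omega(u_+)\cdot H^{\mathrm{num}}g(u_+)-\tfrac12\omega(u_-)\cdot H^{\mathrm{num}}g(u_-).$$
   Context: For a function $a$ on $Y$ and states $u_\pm$: $\{\{a\}\}=\tfrac12(a(u_-)+a(u_+))$, $[\![a]\!]=a(u_+)-a(u_-)$. *)

(* Defs.v *)
From HB Require Import structures.
From mathcomp Require Import all_boot all_order all_algebra.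
From mathcomp Require Import all_classical all_reals all_analysis.
Set Implicit Arguments. Unset Strict Implicit. Unset Printing Implicit Defensive.
Import Order.TTheory GRing.Theory Num.Theory.
Import numFieldNormedType.Exports.
Local Open Scope ring_scope.

Definition dotv (R : realType) (n : nat) (a b : 'cV[R]_n) : R :=
  \sum_(i < n) a i 0 * b i 0.

(* Main.v *)
Require Import Defs.
From HB Require Import structures.
From mathcomp Require Import all_boot all_order all_algebra.
From mathcomp Require Import all_classical all_reals all_analysis.
From mathcomp Require Import lra.
Import Order.TTheory GRing.Theory Num.Theory.
Import numFieldNormedType.Exports.
Local Open Scope classical_set_scope.
Local Open Scope ring_scope.

Section Dot.
Variables (R : realType) (n : nat).
Implicit Types a b c : 'cV[R]_n.
Lemma dotvDl a b c : dotv (a + b) c = dotv a c + dotv b c.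
Proof. rewrite /dotv -big_split; apply: eq_bigr => i _; by rewrite mxE mulrDl. Qed.
Lemma dotvDr a b c : dotv a (b + c) = dotv a b + dotv a c.
Proof. rewrite /dotv -big_split; apply: eq_bigr => i _; by rewrite mxE mulrDr. Qed.
Lemma dotvNl a c : dotv (- a) c = - dotv a c.
Proof. rewrite /dotv -sumrN; apply: eq_bigr => i _; by rewrite mxE mulNr. Qed.
Lemma dotvNr a c : dotv a (- c) = - dotv a c.
Proof. rewrite /dotv -sumrN; apply: eq_bigr => i _; by rewrite mxE mulrN. Qed.
Lemma dotvBl a b c : dotv (a - b) c = dotv a c - dotv b c.
Proof. by rewrite dotvDl dotvNl. Qed.
Lemma dotvBr a b c : dotv a (b - c) = dotv a b - dotv a c.
Proof. by rewrite dotvDr dotvNr. Qed.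
Lemma dotvZl (k : R) a c : dotv (k *: a) c = k * dotv a c.
Proof. rewrite /dotv mulr_sumr; apply: eq_bigr => i _; by rewrite mxE mulrA. Qed.
End Dot.

Theorem mainTheorem7 (R : realType) (n m : nat) (Y : set 'cV[R]_n)
  (omega f : 'cV[R]_n -> 'cV[R]_n) (F : 'cV[R]_n -> R)
  (H : 'cV[R]_n -> 'M[R]_(n, m)) (g : 'cV[R]_n -> 'cV[R]_m)
  (fnum : 'cV[R]_n -> 'cV[R]_n -> 'cV[R]_n)
  (Hnum : 'cV[R]_n -> 'cV[R]_n -> 'M[R]_(n, m))
  (Hgnum : 'cV[R]_n -> 'cV[R]_n -> 'cV[R]_n) :
  open Y ->
  (forall u, Y u -> fnum u u = f u) ->
  (forall u, Y u -> Hnum u u = H u) ->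
  (forall u, Y u -> Hgnum u u = H u *m g u) ->
  let lhsA (um u0 up : 'cV[R]_n) : R :=
    dotv (omega u0)
      (fnum u0 up - fnum um u0 + Hgnum u0 up - Hgnum um u0
       - Hnum u0 up *m g u0 + Hnum um u0 *m g u0) in
  let lhsB (um up : 'cV[R]_n) : R :=
    dotv (omega up - omega um) (fnum um up)
    + dotv (omega up - omega um) (Hgnum um up)
    - dotv (omega up) (Hnum um up *m g up)
    + dotv (omega um) (Hnum um up *m g um) in
  let rhsB (um up : 'cV[R]_n) : R :=
    (dotv (omega up) (f up) - F up) - (dotv (omega um) (f um) - F um) in
  ((exists Fnum : 'cV[R]_n -> 'cV[R]_n -> R,
      (forall u, Y u -> Fnum u u = F u) /\
      (forall um u0 up, Y um -> Y u0 -> Y up ->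
         lhsA um u0 up >= Fnum u0 up - Fnum um u0))
   <->
   (forall um up, Y um -> Y up -> lhsB um up <= rhsB um up))
  /\
  ((exists Fnum : 'cV[R]_n -> 'cV[R]_n -> R,
      (forall u, Y u -> Fnum u u = F u) /\
      (forall um u0 up, Y um -> Y u0 -> Y up ->
         lhsA um u0 up = Fnum u0 up - Fnum um u0))
   <->
   (forall um up, Y um -> Y up -> lhsB um up = rhsB um up))
  /\
  (forall Fnum : 'cV[R]_n -> 'cV[R]_n -> R,
      (forall u, Y u -> Fnum u u = F u) ->
      (forall um u0 up, Y um -> Y u0 -> Y up ->
         lhsA um u0 up = Fnum u0 up - Fnum um u0) ->
      forall um up, Y um -> Y up ->
        Fnum um up =
          (F um + F up) / 2
          + dotv (2^-1 *: (omega um + omega up)) (fnum um up)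
          - (dotv (omega um) (f um) + dotv (omega up) (f up)) / 2
          + dotv (2^-1 *: (omega um + omega up)) (Hgnum um up)
          - dotv (omega up) (Hnum um up *m g up) / 2
          - dotv (omega um) (Hnum um up *m g um) / 2).
Proof.
move=> _ hf hH hHg lhsA lhsB rhsB.
pose P a b := dotv (omega a) (fnum a b) + dotv (omega a) (Hgnum a b)
              - dotv (omega a) (Hnum a b *m g a).
pose Q a b := dotv (omega b) (fnum a b) + dotv (omega b) (Hgnum a b)
              - dotv (omega b) (Hnum a b *m g b).
pose E u := dotv (omega u) (f u) - F u.
have eA um u0 up : lhsA um u0 up = P u0 up - Q um u0.
  rewrite /lhsA /P /Q !(dotvDr, dotvNr); lra.
have eB a b : lhsB a b = Q a b - P a b.
  rewrite /lhsB /P /Q !(dotvDl, dotvNl); lra.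
have eR a b : rhsB a b = E b - E a by [].
have dP u : Y u -> P u u = dotv (omega u) (f u).
  move=> Yu; rewrite /P hf // hHg // hH //; lra.
have dQ u : Y u -> Q u u = dotv (omega u) (f u).
  move=> Yu; rewrite /Q hf // hHg // hH //; lra.
split; [|split].
- split.
  + move=> [Fn [Fd HA]] a b Ya Yb; rewrite eB eR.
    have h1 := HA a b b Ya Yb Yb; have h2 := HA a a b Ya Ya Yb.
    rewrite !eA in h1 h2; rewrite Fd // in h1; rewrite Fd // in h2.
    move: h1 h2; rewrite dP // dQ // /E; lra.
  + move=> HB; exists (fun a b => P a b - E a); split.
      by move=> u Yu; rewrite dP // /E; lra.
    move=> a b c Ya Yb Yc; rewrite eA.
    have := HB a b Ya Yb; rewrite eB eR; lra.
- split.
  + move=> [Fn [Fd HA]] a b Ya Yb; rewrite eB eR.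
    have h1 := HA a b b Ya Yb Yb; have h2 := HA a a b Ya Ya Yb.
    rewrite !eA in h1 h2; rewrite Fd // in h1; rewrite Fd // in h2.
    move: h1 h2; rewrite dP // dQ // /E; lra.
  + move=> HB; exists (fun a b => P a b - E a); split.
      by move=> u Yu; rewrite dP // /E; lra.
    move=> a b c Ya Yb Yc; rewrite eA.
    have := HB a b Ya Yb; rewrite eB eR; lra.
- move=> Fn Fd HA a b Ya Yb.
  have h1 := HA a b b Ya Yb Yb; have h2 := HA a a b Ya Ya Yb.
  rewrite !eA in h1 h2; rewrite Fd // in h1; rewrite Fd // in h2.
  move: h1 h2; rewrite dP // dQ // /P /Q !(dotvZl, dotvDl); lra.
Qed.
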